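(* Let $H_0\in\mathbb{C}^{n\times n}$ be a Hermitian positive-semidefinite matrix. Then $H_0$ is isotropic, i.e. $H_0 H_0^T = 0_{n\times n}$, if and only if there exist a complex orthogonal matrix $R\in\mathbb{C}^{n\times n}$ ($R R^T = R^T R = \mathbb{I}_n$), an integer $m\ge 1$, and a matrix $O\in\mathbb{C}^{m\times n}$ with $O O^T = 0_{m\times m}$, such that $H_0 = R^\dagger O^\dagger O R$.
   Context: $^T$ denotes transpose (no conjugation), $^\dagger$ conjugate transpose, $\mathbb{I}_n$ the $n\times n$ identity. *)

(* Defs.v *)
From HB Require Import structures.
From mathcomp Require Import all_boot all_order all_algebra.
Set Implicit Arguments. Unset Strict Implicit. Unset Printing Implicit Defensive.
Import Order.TTheory GRing.Theory Num.Theory.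
Local Open Scope ring_scope.

Definition ctrmx (C : numClosedFieldType) (m n : nat) (A : 'M[C]_(m, n)) :
  'M[C]_(n, m) := (map_mx Num.conj A)^T.

Definition hermitian_mx (C : numClosedFieldType) (n : nat) (H : 'M[C]_n) : Prop :=
  ctrmx H = H.

(* Hermitian positive semidefinite: Hermitian and v^dagger H v >= 0 for every
   column vector v (the order on C: 0 <= z means z is real and nonnegative). *)
Definition hermitian_psd (C : numClosedFieldType) (n : nat) (H : 'M[C]_n) : Prop :=
  hermitian_mx H /\ forall v : 'cV[C]_n, 0 <= (ctrmx v *m H *m v) 0 0.

Definition complex_orthogonal (C : numClosedFieldType) (n : nat) (R : 'M[C]_n) : Prop :=
  R *m R^T = 1%:M /\ R^T *m R = 1%:M.

(* Main.v *)
Require Import Defs.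
From HB Require Import structures.
From mathcomp Require Import all_boot all_order all_algebra.
From mathcomp Require Import sesquilinear spectral.
Import Order.TTheory GRing.Theory Num.Theory.
Local Open Scope ring_scope.

Section Aux.
Context {C : numClosedFieldType}.

Lemma ctrmx_mul m n p (A : 'M[C]_(m, n)) (B : 'M[C]_(n, p)) :
  ctrmx (A *m B) = ctrmx B *m ctrmx A.
Proof. by rewrite /ctrmx map_mxM trmx_mul. Qed.

Lemma ctrmxK m n (A : 'M[C]_(m, n)) : ctrmx (ctrmx A) = A.
Proof.
by apply/matrixP => i j; rewrite /ctrmx !mxE conjCK.
Qed.

Lemma ctrmx_tr m n (A : 'M[C]_(m, n)) : (ctrmx A)^T = map_mx Num.conj A.
Proof. by rewrite /ctrmx trmxK. Qed.

Lemma ctrmx_eq0 m n (A : 'M[C]_(m, n)) : ctrmx A *m A = 0 -> A = 0.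
Proof.
move=> H; apply/matrixP => i j.
have /matrixP /(_ j j) := H; rewrite !mxE => Hs.
have Hge : forall k : 'I_m, true -> 0 <= (ctrmx A) j k * A k j.
  by move=> k _; rewrite /ctrmx !mxE mulrC mul_conjC_ge0.
have := psumr_eq0P Hge Hs (i:=i) isT.
by rewrite /ctrmx !mxE mulrC => /eqP; rewrite mul_conjC_eq0 => /eqP.
Qed.

Lemma key m n p (L : 'M[C]_(m, n)) (Z : 'M[C]_(n, p)) :
  ctrmx L *m L *m Z = 0 -> L *m Z = 0.
Proof.
move=> H; apply: ctrmx_eq0.
by rewrite ctrmx_mul -!mulmxA (mulmxA (ctrmx L)) H mulmx0.
Qed.


End Aux.

Section Aux2.
Local Open Scope sesquilinear_scope.
Lemma ctrE {C : numClosedFieldType} m n (A : 'M[C]_(m, n)) : ctrmx A = A ^t*.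
Proof. by apply/matrixP => i j; rewrite /ctrmx !mxE. Qed.

Lemma psd_factor {C : numClosedFieldType} n (H : 'M[C]_n) :
  hermitian_psd H -> exists L : 'M[C]_n, H = ctrmx L *m L.
Proof.
move=> [Hh Hp].
have Hn : H \is normalmx.
  by apply/normalmxP; rewrite -ctrE Hh.
have E := orthomx_spectralP Hn.
set P := spectralmx H in E; set d := spectral_diag H in E.
have PU : P \is unitarymx by apply: spectral_unitarymx.
have PPt : P *m P ^t* = 1%:M by apply/unitarymxP.
rewrite invmx_unitary // in E.
have dge : forall i, 0 <= d 0 i.
  move=> i; have := Hp (P ^t* *m delta_mx i 0).
  rewrite ctrmx_mul !ctrE trmxCK E.
  rewrite !mulmxA -(mulmxA _ P) PPt mulmx1 -(mulmxA _ P) PPt mulmx1.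
  rewrite !mxE (bigD1 i) //= big1 ?addr0; last first.
    move=> k /negbTE ki; rewrite !mxE ki /= mulr0 //.
  rewrite !mxE (bigD1 i) //= big1 ?addr0; last first.
    by move=> k /negbTE ki; rewrite !mxE ki /= ?mulr0n ?mul0r ?mulr0.
  idtac.
  by rewrite !mxE !eqxx /= conjC1 mulr1n mul1r mulr1.
exists (diag_mx (map_mx sqrtC d) *m P).
rewrite ctrmx_mul !ctrE E mulmxA; congr (_ *m _).
rewrite -mulmxA; congr (_ *m _).
apply/matrixP => i j; rewrite !mxE (bigD1 j) //= big1 ?addr0; last first.
  by move=> k /negbTE kj; rewrite !mxE kj /= ?mulr0n ?mul0r ?mulr0.
rewrite !mxE eqxx /= mulr1n.
case: (eqVneq i j) => [->|ij]; last by rewrite !mulr0n rmorph0 mul0r.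
rewrite !mulr1n conj_Creal; last by rewrite ger0_real // sqrtC_ge0.
by rewrite -expr2 sqrtCK.
Qed.

End Aux2.

Theorem theorem2 (C : numClosedFieldType) (n : nat) (H0 : 'M[C]_n) :
  hermitian_psd H0 ->
  (H0 *m H0^T = 0 <->
   exists (R : 'M[C]_n) (m : nat) (O : 'M[C]_(m, n)),
     [/\ complex_orthogonal R, (1 <= m)%N, O *m O^T = 0 &
         H0 = ctrmx R *m ctrmx O *m O *m R]).
Proof.
move=> Hpsd; split.
- move=> HH; have [L EL] := psd_factor _ _ Hpsd.
  have h1 : L *m (L^T *m map_mx Num.conj L) = 0.
    apply: key; rewrite -HH EL trmx_mul ctrmx_tr !mulmxA //.
  have h2 : ctrmx L *m L *m L^T = 0.
    have := congr1 trmx h1; rewrite trmx0 !trmx_mul trmxK => <-.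
    by [].
  have h3 : L *m L^T = 0 by apply: key.
  exists 1%:M, (1 + n)%N, (col_mx (0 : 'M[C]_(1, n)) L); split => //.
  + by rewrite /complex_orthogonal trmx1 mulmx1.
  + by rewrite tr_col_mx mul_col_row h3 !mul0mx trmx0 mulmx0 block_mx0.
  + rewrite /ctrmx map_mx1 trmx1 mul1mx mulmx1 map_col_mx tr_col_mx mul_row_col.
    by rewrite -/(ctrmx L) -EL map_mx0 trmx0 mul0mx add0r.
- move=> [R [m [O [[RRt _] _ OOt E]]]].
  rewrite {2}E !trmx_mul !ctrmx_tr E !mulmxA.
  rewrite -(mulmxA _ R R^T) RRt mulmx1 -(mulmxA _ O O^T) OOt mulmx0.
  by rewrite !mul0mx.
Qed.
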